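(* Let $m\ge 2$ and let $K_1,K_2$ be Latin squares on $[m]$. If $K_1$ and $K_2$ are main class isotopic, then the matroids $M[K_1]$ and $M[K_2]$ are isomorphic. If $K_1$ is not main class isotopic to $K_2$, then $M[K_1]$ is not isomorphic to $M[K_2]$.
   Context: A Latin square of order $m$ on $[m]$ is an $m\times m$ matrix $K=(k_{i,j})$ with entries in $[m]$ such that each symbol occurs exactly once in each row and each column. More generally, given $m$-sets $E_1,E_2,E_3$, a Latin square with rows indexed by $E_1$, columns by $E_2$ and symbols in $E_3$ has $T(K)=\{\{x_1,x_2,x_3\}: x_i\in E_i,\ k_{x_1,x_2}=x_3\}$. Two Latin squares are isotopic if one is obtained from the other by permuting rows, permuting columns, and applying a bijection of the symbol set. For a permutation $\sigma$ of $\{1,2,3\}$, the $\sigma$-conjugate $K_\sigma$ is the Latin square with rows indexed by $E_{\sigma 1}$, columns by $E_{\sigma2}$, symbols in $E_{\sigma 3}$, defined by $T(K_\sigma)=T(K)$. Two Latin squares are main class isotopic if one is isotopic to some conjugate of the other. For a Latin square $K=(k_{i,j})$ on $[m]$, let $\mathcal{C}[K]=\{\{i, m+j, 2m+k_{i,j}\}: 1\le i,j\le m\}$, a family of $3$-subsets of $[3m]$. For $m\ge 2$, $M[K]$ denotes the unique simple matroid on $[3m]$ of rank $3$ whose family of all $3$-element circuits equals $\mathcal{C}[K]$. *)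

(* Defs.v *)
From mathcomp Require Import all_boot all_order all_fingroup.
Set Implicit Arguments. Unset Strict Implicit. Unset Printing Implicit Defensive.

(* [m] is represented by 'I_m (0-based), [3m] by 'I_(3*m). *)

Definition latin_square (m : nat) (K : 'I_m -> 'I_m -> 'I_m) : Prop :=
  (forall (i s : 'I_m), #|[set j | K i j == s]| = 1) /\
  (forall (j s : 'I_m), #|[set i | K i j == s]| = 1).

(* T(K), with a triple written as an ordered function t : 'I_3 -> 'I_m,
   t 0 in E_1 (rows), t 1 in E_2 (columns), t 2 in E_3 (symbols). *)
Definition inT (m : nat) (K : 'I_m -> 'I_m -> 'I_m) (t : 'I_3 -> 'I_m) : bool :=
  K (t (@Ordinal 3 0 isT)) (t (@Ordinal 3 1 isT)) == t (@Ordinal 3 2 isT).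

(* L is the sigma-conjugate K_sigma of K: rows of L come from E_(sigma 1),
   columns from E_(sigma 2), symbols from E_(sigma 3), and T(L) = T(K);
   i.e. (u0,u1,u2) in T(L) iff the triple t with t_(sigma j) = u_j is in T(K). *)
Definition is_conjugate (m : nat) (s : {perm 'I_3})
  (K L : 'I_m -> 'I_m -> 'I_m) : Prop :=
  forall u : 'I_3 -> 'I_m, inT L u = inT K (fun i => u (s^-1 i)%g).

Definition isotopic (m : nat) (A B : 'I_m -> 'I_m -> 'I_m) : Prop :=
  exists (a b c : {perm 'I_m}), forall i j, B (a i) (b j) = c (A i j).

Definition main_class_isotopic (m : nat) (K1 K2 : 'I_m -> 'I_m -> 'I_m) : Prop :=
  exists (s : {perm 'I_3}) (L : 'I_m -> 'I_m -> 'I_m),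
    is_conjugate s K1 L /\ isotopic L K2.

Definition is_matroid (T : finType) (I : {set T} -> bool) : Prop :=
  [/\ I set0,
      (forall A B : {set T}, B \subset A -> I A -> I B) &
      (forall A B : {set T}, I A -> I B -> #|A| < #|B| ->
          exists2 x, x \in B :\: A & I (x |: A))].

Definition circuit (T : finType) (I : {set T} -> bool) (C : {set T}) : Prop :=
  ~~ I C /\ (forall D : {set T}, D \proper C -> I D).

(* simple: no loops and no parallel elements, i.e. no circuits of size <= 2 *)
Definition simple_matroid (T : finType) (I : {set T} -> bool) : Prop :=
  forall C, circuit I C -> 2 < #|C|.

Definition matroid_rank_is (T : finType) (I : {set T} -> bool) (r : nat) : Prop :=
  (exists X, I X /\ #|X| = r) /\ (forall X, I X -> #|X| <= r).

Definition CK (m : nat) (K : 'I_m -> 'I_m -> 'I_m) : {set {set 'I_(3 * m)}} :=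
  [set X : {set 'I_(3 * m)} | [exists i : 'I_m, exists j : 'I_m,
     X == [set y : 'I_(3 * m) |
             val y \in [:: val i; m + val j; 2 * m + val (K i j)]]]].

Definition is_MK (m : nat) (K : 'I_m -> 'I_m -> 'I_m)
  (I : {set 'I_(3 * m)} -> bool) : Prop :=
  [/\ is_matroid I, simple_matroid I, matroid_rank_is I 3 &
      forall C : {set 'I_(3 * m)}, (circuit I C /\ #|C| = 3) <-> C \in CK K].

Definition matroid_iso (T : finType) (I1 I2 : {set T} -> bool) : Prop :=
  exists f : {perm T}, forall X : {set T}, I2 (f @: X) = I1 X.

(* Main.v *)
Require Import Defs.
From mathcomp Require Import all_boot all_order all_fingroup.
From mathcomp Require Import zify.
Set Implicit Arguments. Unset Strict Implicit. Unset Printing Implicit Defensive.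

Notation o0 := (@Ordinal 3 0 isT).
Notation o1 := (@Ordinal 3 1 isT).
Notation o2 := (@Ordinal 3 2 isT).

Lemma ord3P (p : 'I_3) : [\/ p = o0, p = o1 | p = o2].
Proof.
case: p => [[|[|[|n]]] Hp].
- by apply: Or31; apply: val_inj.
- by apply: Or32; apply: val_inj.
- by apply: Or33; apply: val_inj.
- by [].
Qed.

Definition mk3 (T : Type) (a b c : T) (q : 'I_3) : T :=
  if val q == 0 then a else if val q == 1 then b else c.

Section S.
Variable m : nat.
Hypothesis Hm : 0 < m.

Lemma enc_proof (p : 'I_3) (k : 'I_m) : p * m + k < 3 * m.
Proof. have := ltn_ord p; have := ltn_ord k. nia. Qed.
Definition enc p k : 'I_(3*m) := Ordinal (enc_proof p k).

Lemma pt_proof (y : 'I_(3*m)) : y %/ m < 3.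
Proof. by rewrite ltn_divLR // mulnC. Qed.
Definition pt y : 'I_3 := Ordinal (pt_proof y).
Definition ix (y : 'I_(3*m)) : 'I_m := Ordinal (ltn_pmod y Hm).

Lemma pt_enc p k : pt (enc p k) = p.
Proof. apply: val_inj => /=. rewrite divnMDl // divn_small // addn0 //. Qed.
Lemma ix_enc p k : ix (enc p k) = k.
Proof. apply: val_inj => /=. rewrite modnMDl modn_small //. Qed.
Lemma enc_pt_ix y : enc (pt y) (ix y) = y.
Proof. apply: val_inj => /=. by rewrite -divn_eq. Qed.
Lemma enc_inj p k p' k' : enc p k = enc p' k' -> p = p' /\ k = k'.
Proof. move=> E; split; [have := pt_enc p k | have := ix_enc p k]; by rewrite E ?pt_enc ?ix_enc. Qed.

Definition tri (t : 'I_3 -> 'I_m) : {set 'I_(3*m)} := [set enc p (t p) | p : 'I_3].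

Lemma tri_inj t u : tri t = tri u -> t =1 u.
Proof.
move=> E p. have : enc p (t p) \in tri u by rewrite -E; apply: imset_f.
case/imsetP=> p' _ /enc_inj [E1 E2]. by rewrite E2 E1.
Qed.

Lemma tri_ext t u : t =1 u -> tri t = tri u.
Proof. move=> E; apply: eq_imset => p; by rewrite E. Qed.

Lemma inT_ext (K : 'I_m -> 'I_m -> 'I_m) t u : t =1 u -> inT K t = inT K u.
Proof. by move=> E; rewrite /inT !E. Qed.

Lemma card_tri t : #|tri t| = 3.
Proof.
rewrite card_imset ?card_ord // => p q /enc_inj []; done.
Qed.

Lemma tri_val t : tri t = [set y : 'I_(3*m) | val y \in [:: val (t o0); m + val (t o1); 2 * m + val (t o2)]].
Proof.
apply/setP => y; rewrite inE; apply/imsetP/idP.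
- case=> p _ ->; case: (ord3P p) => ->; by rewrite !inE /= ?mul0n ?mul1n ?add0n eqxx ?orbT.
- rewrite !inE => /or3P [] /eqP H.
  + exists o0 => //; apply: val_inj => /=; by rewrite H mul0n add0n.
  + exists o1 => //; apply: val_inj => /=; by rewrite H mul1n.
  + exists o2 => //; apply: val_inj => /=; by rewrite H.
Qed.

Lemma CKP (K : 'I_m -> 'I_m -> 'I_m) X : reflect (exists t, inT K t /\ X = tri t) (X \in CK K).
Proof.
rewrite inE; apply: (iffP existsP).
- case=> i /existsP [j /eqP ->]. exists (mk3 i j (K i j)). split.
    by rewrite /inT /mk3 /=.
  by rewrite tri_val.
- case=> t [Ht ->]. exists (t o0); apply/existsP; exists (t o1).
  rewrite tri_val. move/eqP: Ht => ->. done.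
Qed.

Lemma inT_tri (K : 'I_m -> 'I_m -> 'I_m) t : (tri t \in CK K) = inT K t.
Proof.
apply/CKP/idP.
- case=> t' [Ht /tri_inj E]. by rewrite (inT_ext K E).
- move=> Ht; by exists t.
Qed.

Lemma CK_card (K : 'I_m -> 'I_m -> 'I_m) X : X \in CK K -> #|X| = 3.
Proof. by case/CKP=> t [_ ->]; rewrite card_tri. Qed.

Section Latin.
Variable K : 'I_m -> 'I_m -> 'I_m.
Hypothesis HK : latin_square K.

Lemma row_ex a b : exists j, K a j = b.
Proof.
case: HK => H _. have /eqP/cards1P [j Ej] := H a b.
exists j. have : j \in [set j | K a j == b] by rewrite Ej set11.
by rewrite inE => /eqP.
Qed.

Lemma col_ex a b : exists i, K i a = b.
Proof.
case: HK => _ H. have /eqP/cards1P [j Ej] := H a b.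
exists j. have : j \in [set i | K i a == b] by rewrite Ej set11.
by rewrite inE => /eqP.
Qed.

Lemma ex_t p p' a b : p != p' -> exists t, [/\ inT K t, t p = a & t p' = b].
Proof.
case: (ord3P p) => ->; case: (ord3P p') => -> // _.
- by exists (mk3 a b (K a b)); split; rewrite /inT /mk3 /=.
- have [j Hj] := row_ex a b. by exists (mk3 a j b); split; rewrite /inT /mk3 /= ?Hj.
- by exists (mk3 b a (K b a)); split; rewrite /inT /mk3 /=.
- have [i Hi] := col_ex a b. by exists (mk3 i a b); split; rewrite /inT /mk3 /= ?Hi.
- have [j Hj] := row_ex b a. by exists (mk3 b j a); split; rewrite /inT /mk3 /= ?Hj.
- have [i Hi] := col_ex b a. by exists (mk3 i b a); split; rewrite /inT /mk3 /= ?Hi.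
Qed.

Definition joint (K' : 'I_m -> 'I_m -> 'I_m) x y :=
  [exists X, [&& X \in CK K', x \in X & y \in X]].

Lemma joint_pt x y : x != y -> joint K x y = (pt x != pt y).
Proof.
move=> nxy; apply/existsP/idP.
- case=> X /and3P [/CKP [t [_ ->]] /imsetP [p _ Ex] /imsetP [p' _ Ey]]; subst x y.
  rewrite !pt_enc; apply: contra nxy => /eqP ->. done.
- move=> npt. have [t [Ht E1 E2]] := ex_t (ix x) (ix y) npt.
  exists (tri t); apply/and3P; split; first by rewrite inT_tri.
  + by rewrite -(enc_pt_ix x) -E1; apply/imsetP; exists (pt x).
  + by rewrite -(enc_pt_ix y) -E2; apply/imsetP; exists (pt y).
Qed.
End Latin.

Section IsoC2.
Variables K1 K2 : 'I_m -> 'I_m -> 'I_m.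
Hypotheses (HK1 : latin_square K1) (HK2 : latin_square K2).
Variable f : {perm 'I_(3*m)}.
Hypothesis HF : forall X : {set 'I_(3*m)}, (f @: X \in CK K2) = (X \in CK K1).

Lemma joint_f x y : joint K1 x y = joint K2 (f x) (f y).
Proof.
apply/existsP/existsP => [[X /and3P [HX hx hy]] | [Y /and3P [HY hx hy]]].
- exists (f @: X); apply/and3P; split; [by rewrite HF | exact: imset_f | exact: imset_f].
- exists ((f^-1)%g @: Y).
  have E : f @: ((f^-1)%g @: Y) = Y.
    apply/setP => z; apply/imsetP/idP => [[w /imsetP [v hv ->] ->]|hz].
      by rewrite permKV.
    exists ((f^-1)%g z); [exact: imset_f | by rewrite permKV].
  apply/and3P; split; first by rewrite -HF E.
  + by rewrite -(permK f x) imset_f.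
  + by rewrite -(permK f y) imset_f.
Qed.

Lemma pt_f x y : (pt x == pt y) = (pt (f x) == pt (f y)).
Proof.
case: (eqVneq x y) => [->|nxy]; first by rewrite !eqxx.
have nf : f x != f y by rewrite (inj_eq perm_inj).
apply: negb_inj. by rewrite -(joint_pt HK1 nxy) -(joint_pt HK2 nf) joint_f.
Qed.

Definition k0 : 'I_m := Ordinal Hm.
Definition rho p := pt (f (enc p k0)).
Lemma pt_f_enc p k : pt (f (enc p k)) = rho p.
Proof. by apply/eqP; rewrite -pt_f !pt_enc. Qed.
Lemma rho_inj : injective rho.
Proof. move=> p q E; move/eqP: E; rewrite /rho -pt_f !pt_enc; by move/eqP. Qed.
Definition H p k := ix (f (enc p k)).
Lemma f_enc p k : f (enc p k) = enc (rho p) (H p k).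
Proof. by rewrite -(pt_f_enc p k) enc_pt_ix. Qed.
Lemma H_inj p : injective (H p).
Proof.
move=> k k' E. have : f (enc p k) = f (enc p k') by rewrite !f_enc E.
by move/perm_inj/enc_inj => [].
Qed.
Definition rhoP : {perm 'I_3} := perm rho_inj.
Definition HP p : {perm 'I_m} := perm (@H_inj p).
Definition pi : {perm 'I_3} := (rhoP^-1)%g.
Definition G q := HP (pi q).
Lemma rho_pi q : rho (pi q) = q.
Proof. transitivity (rhoP (pi q)); first exact: (esym (permE _ _)). exact: permKV. Qed.

Lemma key t : inT K1 t = inT K2 (fun q => G q (t (pi q))).
Proof.
rewrite -!inT_tri -HF. have -> : f @: tri t = tri (fun q => G q (t (pi q))); last done.
apply/setP => y; apply/imsetP/imsetP.
- case=> x /imsetP [p _ ->] ->. exists (rhoP p) => //.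
  by rewrite f_enc /G /pi permK !permE.
- case=> q _ ->. exists (enc (pi q) (t (pi q))); first by apply/imsetP; exists (pi q).
  by rewrite f_enc rho_pi /G permE.
Qed.
End IsoC2.

Lemma C2 (K1 K2 : 'I_m -> 'I_m -> 'I_m) : latin_square K1 -> latin_square K2 ->
  (exists f : {perm 'I_(3*m)}, forall X : {set 'I_(3*m)}, (f @: X \in CK K2) = (X \in CK K1)) ->
  exists (pi : {perm 'I_3}) (G : 'I_3 -> {perm 'I_m}),
    forall t, inT K1 t = inT K2 (fun q => G q (t (pi q))).
Proof.
move=> HK1 HK2 [f HF]. eexists; eexists; exact: (key HK1 HK2 HF).
Qed.

Lemma C1 (K1 K2 : 'I_m -> 'I_m -> 'I_m) (pi : {perm 'I_3}) (G : 'I_3 -> {perm 'I_m}) :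
  (forall t, inT K1 t = inT K2 (fun q => G q (t (pi q)))) ->
  (exists f : {perm 'I_(3*m)}, forall X : {set 'I_(3*m)}, (f @: X \in CK K2) = (X \in CK K1)).
Proof.
move=> Hkey.
pose g y := enc ((pi^-1)%g (pt y)) (G ((pi^-1)%g (pt y)) (ix y)).
have g_inj : injective g.
  move=> y y' /enc_inj [E1 E2]. have E3 := perm_inj E1.
  rewrite E1 in E2. have E4 := perm_inj E2.
  by rewrite -(enc_pt_ix y) -(enc_pt_ix y') E3 E4.
pose fP := perm g_inj.
have f_tri t : fP @: tri t = tri (fun q => G q (t (pi q))).
  apply/setP => y; apply/imsetP/imsetP.
  - case=> x /imsetP [p _ ->] ->. exists ((pi^-1)%g p) => //.
    by rewrite permE /g pt_enc ix_enc permKV.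
  - case=> q _ ->. exists (enc (pi q) (t (pi q))); first by apply/imsetP; exists (pi q).
    by rewrite permE /g pt_enc ix_enc permK.
exists fP => X. apply/idP/idP.
- case/CKP => u [Hu E].
  pose t p := ((G ((pi^-1)%g p))^-1)%g (u ((pi^-1)%g p)).
  have Et : (fun q => G q (t (pi q))) =1 u by move=> q; rewrite /t permK permKV.
  have EX : X = tri t.
    apply: (imset_inj (@perm_inj _ fP)). by rewrite /= E f_tri (tri_ext Et).
  apply/CKP; exists t; split => //. by rewrite Hkey (inT_ext _ Et).
- case/CKP => t [Ht ->]. by rewrite f_tri inT_tri -Hkey.
Qed.

Lemma A1 (K1 K2 : 'I_m -> 'I_m -> 'I_m) : main_class_isotopic K1 K2 ->
  exists (pi : {perm 'I_3}) (G : 'I_3 -> {perm 'I_m}),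
    forall t, inT K1 t = inT K2 (fun q => G q (t (pi q))).
Proof.
case=> s [L [HC [a [b [c Hi]]]]].
exists s; exists (mk3 a b c) => t.
have E : (fun i => (fun q => t (s q)) ((s^-1)%g i)) =1 t by move=> i /=; rewrite permKV.
rewrite -(inT_ext _ E) -(HC (fun q => t (s q))) /inT /mk3 /= Hi (inj_eq perm_inj). done.
Qed.

Lemma A2 (K1 K2 : 'I_m -> 'I_m -> 'I_m) (pi : {perm 'I_3}) (G : 'I_3 -> {perm 'I_m}) :
  (forall t, inT K1 t = inT K2 (fun q => G q (t (pi q)))) ->
  main_class_isotopic K1 K2.
Proof.
move=> Hkey. exists pi.
exists (fun x y => ((G o2)^-1)%g (K2 (G o0 x) (G o1 y))). split.
- move=> u. rewrite Hkey /inT !permK.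
  by rewrite -(inj_eq (@perm_inj _ (G o2))) permKV.
- exists (G o0); exists (G o1); exists (G o2) => i j. by rewrite permKV.
Qed.
End S.

Lemma dep_circ (T : finType) (I : {set T} -> bool) n :
  forall X : {set T}, #|X| <= n -> ~~ I X -> exists C : {set T}, C \subset X /\ circuit I C.
Proof.
elim: n => [|n IH] X hX nI.
- case: (boolP [forall D : {set T}, (D \proper X) ==> I D]) => [/forallP Hf|].
    exists X; split => //; split => // D /(implyP (Hf D)).  done.
  move/forallPn => [D]; rewrite negb_imply => /andP [HD _].
  by have := proper_card HD; rewrite ltnNge (leq_trans hX).
- case: (boolP [forall D : {set T}, (D \proper X) ==> I D]) => [/forallP Hf|].
    exists X; split => //; split => // D /(implyP (Hf D)). done.
  move/forallPn => [D]; rewrite negb_imply => /andP [HD nD].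
  have hD : #|D| <= n by have := proper_card HD; lia.
  have [C [HC cC]] := IH D hD nD. exists C; split => //.
  exact: subset_trans HC (proper_sub HD).
Qed.

Lemma Ichar m (K : 'I_m -> 'I_m -> 'I_m) (I : {set 'I_(3 * m)} -> bool) :
  is_MK K I -> forall X, I X = (#|X| <= 2) || ((#|X| == 3) && (X \notin CK K)).
Proof.
case=> [_ Hsimp [_ Hrank] Hcirc].
have small : forall X : {set 'I_(3*m)}, #|X| <= 2 -> I X.
  move=> X hX. apply/negPn/negP => nI.
  have [C [HC cC]] := dep_circ (leqnn _) nI.
  have := Hsimp C cC. have := subset_leq_card HC. 
  move=> h1 h2. have := leq_trans h2 (leq_trans h1 hX). by [].
move=> X. case: (leqP #|X| 2) => h2 /=; first exact: small.
case: (eqVneq #|X| 3) => h3 /=.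
- case: (boolP (X \in CK K)) => hin /=.
    have [[cX _] _] := (proj2 (Hcirc X) hin). exact: negbTE.
  apply/negPn/negP => nI. move/negP: hin; apply. apply/(Hcirc X). split => //.
  split => // D HD. apply: small. have := proper_card HD. by rewrite h3.
- apply/negP => hI. have := Hrank X hI. move/eqP: h3 => h3. lia.
Qed.

Lemma B1 m (K1 K2 : 'I_m -> 'I_m -> 'I_m) I1 I2 :
  is_MK K1 I1 -> is_MK K2 I2 ->
  (exists f : {perm 'I_(3*m)}, forall X : {set 'I_(3*m)}, (f @: X \in CK K2) = (X \in CK K1)) ->
  matroid_iso I1 I2.
Proof.
move=> H1 H2 [f Hf]; exists f => X.
by rewrite (Ichar H1) (Ichar H2) (card_imset _ perm_inj) Hf.
Qed.

Lemma B2 m (Hm : 0 < m) (K1 K2 : 'I_m -> 'I_m -> 'I_m) I1 I2 :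
  is_MK K1 I1 -> is_MK K2 I2 -> matroid_iso I1 I2 ->
  (exists f : {perm 'I_(3*m)}, forall X : {set 'I_(3*m)}, (f @: X \in CK K2) = (X \in CK K1)).
Proof.
move=> H1 H2 [f Hf]; exists f => X.
have := Hf X. rewrite (Ichar H1) (Ichar H2) (card_imset _ perm_inj).
case: (eqVneq #|X| 3) => h3.
- rewrite h3 /=. by case: (_ \in CK K2); case: (_ \in CK K1).
- move=> _. apply/idP/idP => /(CK_card Hm).
  + rewrite (card_imset _ perm_inj) => E; exfalso; move/eqP: h3; apply. done.
  + by move=> E; exfalso; move/eqP: h3; apply.
Qed.

Theorem mainTheorem4 (m : nat) (K1 K2 : 'I_m -> 'I_m -> 'I_m)
    (I1 I2 : {set 'I_(3 * m)} -> bool) :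
  2 <= m -> latin_square K1 -> latin_square K2 ->
  is_MK K1 I1 -> is_MK K2 I2 ->
  (main_class_isotopic K1 K2 -> matroid_iso I1 I2) /\
  (~ main_class_isotopic K1 K2 -> ~ matroid_iso I1 I2).
Proof.
move=> hm HK1 HK2 H1 H2.
have Hm : 0 < m by apply: leq_trans hm.
split.
- move/A1 => [pi [G Hk]]. apply: (B1 H1 H2). exact: (C1 Hm Hk).
- move=> nM /(B2 Hm H1 H2) Hf. apply: nM.
  have [pi [G Hk]] := C2 Hm HK1 HK2 Hf. exact: A2 Hk.
Qed.
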